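(* Let $f$ be an expansive Lorenz map with critical point $c$ and $H=(a,b)$ a hole with $a\le c\le b$, $a\ne b$. If $\tilde S^+_f(a,b)\not\subseteq\{0^\infty,1^\infty\}$ and the pair $(\mathbf b,\mathbf a)$ is not weak-admissible, then there exist $s,t\in\{0,1\}^{\mathbb N}$ such that $(1s,0t)$ is weak-admissible and $\Omega(1s,0t)=\tilde S^+_f(a,b)$.
   Context: Lorenz map: $f:[0,1]\to[0,1]$ with $c\in(0,1)$, $f$ strictly increasing on $[0,c)$ and $(c,1]$, $\lim_{x\uparrow c}f=1$, $\lim_{x\downarrow c}f=0$; expansive if $\bigcup_{n\ge0}f^{-n}(c)$ is dense. $\preceq$ is the lexicographic order on $\{0,1\}^{\mathbb N}$, $\sigma$ the left shift. Kneading sequences $\tau_f(x)=\epsilon_0\epsilon_1\cdots$ ($\epsilon_i=0$ if $f^i(x)<c$, $1$ if $f^i(x)>c$), and $\tau_f(x\pm)=\lim_{y\to x^\pm}\tau_f(y)$ over non-preimages $y$ of $c$. Put $\mathbf a=\tau_f(a-)$, $\mathbf b=\tau_f(b+)$, $\tilde S^+_f(a,b)=\{w: \sigma(\mathbf b)\preceq\sigma^n(w)\preceq\sigma(\mathbf a)\ \forall n\ge0\}$, and $\Omega(1s,0t)=\{w:s\preceq\sigma^n(w)\preceq t\ \forall n\ge0\}$. A pair $(k_+,k_-)$ of sequences is weak-admissible if $\sigma(k_+)\preceq\sigma^n(k_+)\preceq\sigma(k_-)$ and $\sigma(k_+)\preceq\sigma^n(k_-)\preceq\sigma(k_-)$ for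 all $n\ge0$. *)

(* Defs.v *)
(* concrete reals R; binary sequences as nat -> bool
   (false = 0, true = 1). *)
From Stdlib Require Import Reals Lra.
Open Scope R_scope.

Definition lorenz_map (f : R -> R) (c : R) : Prop :=
  0 < c < 1 /\
  (forall x, 0 <= x <= 1 -> 0 <= f x <= 1) /\
  (forall x y, 0 <= x -> x < y -> y < c -> f x < f y) /\
  (forall x y, c < x -> x < y -> y <= 1 -> f x < f y) /\
  (forall eps, 0 < eps -> exists delta, 0 < delta /\
      forall x, c - delta < x < c -> Rabs (f x - 1) < eps) /\
  (forall eps, 0 < eps -> exists delta, 0 < delta /\
      forall x, c < x < c + delta -> Rabs (f x - 0) < eps).

Definition preimage_of_c (f : R -> R) (c y : R) : Prop :=
  exists n : nat, Nat.iter n f y = c.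

Definition expansive (f : R -> R) (c : R) : Prop :=
  forall x y, 0 <= x -> x < y -> y <= 1 ->
    exists z, x < z < y /\ preimage_of_c f c z.

Definition bseq := nat -> bool.

(** Kneading sequence of a point (meaningful for non-preimages of c). *)
Definition kneading (f : R -> R) (c x : R) : bseq :=
  fun i => if Rlt_dec (Nat.iter i f x) c then false else true.

(** w = tau_f(x-) : limit (product topology) of tau_f(y) as y -> x from the
    left, y ranging over points of [0,1] that are not preimages of c. *)
Definition left_kneading (f : R -> R) (c x : R) (w : bseq) : Prop :=
  forall N : nat, exists delta, 0 < delta /\
    forall y, x - delta < y < x -> 0 <= y -> ~ preimage_of_c f c y ->
      forall i, (i < N)%nat -> kneading f c y i = w i.

Definition right_kneading (f : R -> R) (c x : R) (w : bseq) : Prop :=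
  forall N : nat, exists delta, 0 < delta /\
    forall y, x < y < x + delta -> y <= 1 -> ~ preimage_of_c f c y ->
      forall i, (i < N)%nat -> kneading f c y i = w i.

Definition shift (w : bseq) : bseq := fun i => w (S i).
Definition shiftn (n : nat) (w : bseq) : bseq := fun i => w (n + i)%nat.
Definition bcons (b : bool) (w : bseq) : bseq :=
  fun i => match i with O => b | S j => w j end.

Definition lex_lt (w v : bseq) : Prop :=
  exists n, (forall i, (i < n)%nat -> w i = v i) /\ w n = false /\ v n = true.
Definition lex_le (w v : bseq) : Prop := (forall i, w i = v i) \/ lex_lt w v.

(** S~^+_f(a,b), with ka = tau_f(a-), kb = tau_f(b+) *)
Definition S_tilde (ka kb : bseq) (w : bseq) : Prop :=
  forall n, lex_le (shift kb) (shiftn n w) /\ lex_le (shiftn n w) (shift ka).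

Definition Omega (s t : bseq) (w : bseq) : Prop :=
  forall n, lex_le s (shiftn n w) /\ lex_le (shiftn n w) t.

Definition weak_admissible (kp km : bseq) : Prop :=
  forall n,
    (lex_le (shift kp) (shiftn n kp) /\ lex_le (shiftn n kp) (shift km)) /\
    (lex_le (shift kp) (shiftn n km) /\ lex_le (shiftn n km) (shift km)).

Definition zero_inf : bseq := fun _ => false.
Definition one_inf : bseq := fun _ => true.

(* Main.v *)
Require Import Defs.
From Stdlib Require Import Reals Lia Classical ClassicalDescription FunctionalExtensionality Bool ClassicalEpsilon.
Open Scope R_scope.

Definition agree (N : nat) (u v : bseq) : Prop := forall i, (i < N)%nat -> u i = v i.

Lemma least_ex (P : nat -> Prop) : (exists n, P n) ->
  exists n, P n /\ forall m, (m < n)%nat -> ~ P m.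
Proof.
  intros [n Hn]. apply NNPP; intro Hno.
  assert (H : forall k, forall m, (m <= k)%nat -> ~ P m).
  { induction k; intros m Hm HP.
    - apply Hno. exists m. split; auto. intros; lia.
    - destruct (Nat.eq_dec m (S k)).
      + subst. apply Hno. exists (S k). split; auto. intros j Hj. apply IHk; lia.
      + apply (IHk m); auto; lia. }
  exact (H n n (le_n _) Hn).
Qed.

Lemma lex_lt_not_le w v : lex_lt w v -> ~ lex_le v w.
Proof.
  intros [n [Ha [Hw Hv]]] [Heq | [m [Hb [Hv' Hw']]]].
  - rewrite Heq in Hv. congruence.
  - destruct (Nat.lt_trichotomy m n) as [Hl|[He|Hg]].
    + rewrite Ha in Hw' by auto. congruence.
    + subst. congruence.
    + rewrite Hb in Hv by auto. congruence.
Qed.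

Lemma lex_total w v : lex_le w v \/ lex_lt v w.
Proof.
  destruct (classic (forall i, w i = v i)) as [H|H]. left; left; auto.
  apply not_all_ex_not in H.
  destruct (least_ex _ H) as [i [Hi Hmin]].
  assert (Hag : forall j, (j < i)%nat -> w j = v j).
  { intros j Hj. apply NNPP. apply Hmin; auto. }
  destruct (w i) eqn:E1; destruct (v i) eqn:E2; try congruence.
  - right. exists i. split; [intros; symmetry; auto| auto].
  - left. right. exists i. auto.
Qed.

Lemma lex_le_eq a b : lex_le a b -> a = b \/ lex_lt a b.
Proof. intros [H|H]; [left; apply functional_extensionality; auto | auto]. Qed.

Lemma lex_lt_trans a b c : lex_lt a b -> lex_lt b c -> lex_lt a c.
Proof.
  intros [n [Ha [H1 H2]]] [m [Hb [H3 H4]]].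
  destruct (Nat.lt_trichotomy n m) as [Hl|[He|Hg]].
  - exists n. split. intros i Hi. rewrite Ha by auto. apply Hb; lia.
    split; auto. rewrite <- Hb by auto. auto.
  - subst. congruence.
  - exists m. split. intros i Hi. rewrite Ha by lia. apply Hb; lia.
    split; auto. rewrite Ha by auto. auto.
Qed.

Lemma lex_le_trans a b c : lex_le a b -> lex_le b c -> lex_le a c.
Proof.
  intros H1 H2. apply lex_le_eq in H1. apply lex_le_eq in H2.
  destruct H1 as [->|H1]; destruct H2 as [->|H2].
  - left; auto.
  - right; auto.
  - right; auto.
  - right. eapply lex_lt_trans; eauto.
Qed.

Lemma closed_le_left A w :
  (forall N, exists v, agree N v w /\ lex_le A v) -> lex_le A w.
Proof.
  intros H. destruct (lex_total A w) as [|[m [Ha [H1 H2]]]]; auto.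
  destruct (H (S m)) as [v [Hag Hle]]. exfalso.
  apply (lex_lt_not_le v A); auto.
  exists m. split. intros i Hi. rewrite Hag by lia. auto.
  rewrite Hag by lia. auto.
Qed.

Lemma closed_le_right A w :
  (forall N, exists v, agree N v w /\ lex_le v A) -> lex_le w A.
Proof.
  intros H. destruct (lex_total w A) as [|[m [Ha [H1 H2]]]]; auto.
  destruct (H (S m)) as [v [Hag Hle]]. exfalso.
  apply (lex_lt_not_le A v); auto.
  exists m. split. intros i Hi. rewrite Hag by lia. auto.
  rewrite Hag by lia. auto.
Qed.

Definition closedX (X : bseq -> Prop) : Prop :=
  forall w, (forall N, exists v, X v /\ agree N v w) -> X w.

Fixpoint gseq (X : bseq -> Prop) (w0 : bseq) (n : nat) : bseq :=
  match n with
  | O => w0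
  | S n => match excluded_middle_informative
                 (exists w, X w /\ agree n w (gseq X w0 n) /\ w n = false) with
           | left H => proj1_sig (constructive_indefinite_description _ H)
           | right _ => gseq X w0 n
           end
  end.

Lemma gseq_X X w0 : X w0 -> forall n, X (gseq X w0 n).
Proof.
  intros H0 n. induction n; simpl; auto.
  destruct excluded_middle_informative as [H|H]; auto.
  exact (proj1 (proj2_sig (constructive_indefinite_description _ H))).
Qed.

Lemma gseq_step X w0 n : agree n (gseq X w0 (S n)) (gseq X w0 n).
Proof.
  simpl. destruct excluded_middle_informative as [H|H]; [|intros i _; auto].
  exact (proj1 (proj2 (proj2_sig (constructive_indefinite_description _ H)))).
Qed.

Lemma gseq_agree X w0 n m : (n <= m)%nat -> agree n (gseq X w0 m) (gseq X w0 n).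
Proof.
  induction 1. intros i _; auto.
  intros i Hi. rewrite gseq_step by lia. auto.
Qed.

Lemma min_exists X w0 : X w0 -> closedX X ->
  exists s, X s /\ forall w, X w -> lex_le s w.
Proof.
  intros H0 Hc.
  set (s := fun i => gseq X w0 (S i) i).
  assert (Hs : forall n, agree n s (gseq X w0 n)).
  { intros n i Hi. unfold s. symmetry. apply (gseq_agree X w0 (S i) n); lia. }
  exists s. split.
  - apply Hc. intros N. exists (gseq X w0 N). split. apply gseq_X; auto.
    intros i Hi. symmetry. apply Hs; auto.
  - intros w Hw. destruct (lex_total s w) as [|[m [Ha [H1 H2]]]]; auto.
    exfalso.
    assert (E : gseq X w0 (S m) m = true) by exact H2.
    revert E. simpl.
    destruct excluded_middle_informative as [H|H].
    + pose proof (proj2 (proj2 (proj2_sig (constructive_indefinite_description _ H)))).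
      simpl in *. intro E. rewrite E in H3. discriminate.
    + intros _. apply H. exists w. split; auto. split; auto.
      intros i Hi. rewrite Ha by auto. apply Hs; auto.
Qed.

Definition negs (w : bseq) : bseq := fun i => negb (w i).

Lemma negs_negs w : negs (negs w) = w.
Proof. apply functional_extensionality; intro i; unfold negs; apply negb_involutive. Qed.

Lemma negs_le u v : lex_le u v -> lex_le (negs v) (negs u).
Proof.
  intros [H|[n [Ha [H1 H2]]]].
  - left. intro i. unfold negs. rewrite H. auto.
  - right. exists n. unfold negs. split. intros i Hi. rewrite Ha; auto.
    rewrite H1, H2. auto.
Qed.

Lemma max_exists X w0 : X w0 -> closedX X ->
  exists t, X t /\ forall w, X w -> lex_le w t.
Proof.
  intros H0 Hc.
  destruct (min_exists (fun w => X (negs w)) (negs w0)) as [m [Hm Hmin]].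
  - rewrite negs_negs; auto.
  - intros w Hw. apply Hc. intros N. destruct (Hw N) as [v [Hv Hag]].
    exists (negs v). split; auto. intros i Hi. unfold negs. rewrite Hag; auto.
  - exists (negs m). split; auto. intros w Hw.
    rewrite <- (negs_negs w). apply negs_le. apply Hmin. rewrite negs_negs; auto.
Qed.

Lemma shiftn_shiftn n m w : shiftn m (shiftn n w) = shiftn (n + m) w.
Proof. apply functional_extensionality; intro i; unfold shiftn. f_equal; lia. Qed.

Lemma S_tilde_shift ka kb w n : S_tilde ka kb w -> S_tilde ka kb (shiftn n w).
Proof. intros H m. rewrite shiftn_shiftn. apply H. Qed.

Lemma S_tilde_closed ka kb : closedX (S_tilde ka kb).
Proof.
  intros w H n. split.
  - apply closed_le_left. intros N. destruct (H (n + N)%nat) as [v [Hv Hag]].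
    exists (shiftn n v). split. intros i Hi. unfold shiftn. apply Hag; lia.
    apply Hv.
  - apply closed_le_right. intros N. destruct (H (n + N)%nat) as [v [Hv Hag]].
    exists (shiftn n v). split. intros i Hi. unfold shiftn. apply Hag; lia.
    apply Hv.
Qed.

Lemma bcons_shift w : w = bcons (w O) (shift w).
Proof. apply functional_extensionality; intros [|i]; reflexivity. Qed.

Lemma bcons_le b x y : lex_le x y -> lex_le (bcons b x) (bcons b y).
Proof.
  intros [H|[n [Ha [H1 H2]]]].
  - left. intros [|i]; simpl; auto.
  - right. exists (S n). split; auto. intros [|i] Hi; simpl; auto. apply Ha; lia.
Qed.

Lemma bcons_lt x y : lex_le (bcons false x) (bcons true y).
Proof. right. exists O. split; [intros; lia | auto]. Qed.

Theorem lemma3p4 (f : R -> R) (c a b : R) (ka kb : bseq) :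
  lorenz_map f c -> expansive f c ->
  0 < a -> a <= c -> c <= b -> b < 1 -> a <> b ->
  left_kneading f c a ka -> right_kneading f c b kb ->
  (exists w, S_tilde ka kb w /\ w <> zero_inf /\ w <> one_inf) ->
  ~ weak_admissible kb ka ->
  exists s t : bseq,
    weak_admissible (bcons true s) (bcons false t) /\
    (forall w, Omega s t w <-> S_tilde ka kb w).
Proof.
  intros _ _ _ _ _ _ _ _ _ [w0 [Hw0 [Hz Ho]]] _.
  destruct (min_exists _ w0 Hw0 (S_tilde_closed ka kb)) as [s [Hs Hsmin]].
  destruct (max_exists _ w0 Hw0 (S_tilde_closed ka kb)) as [t [Ht Htmax]].
  assert (Hs0 : s O = false).
  { destruct (s O) eqn:E; auto. exfalso. apply Ho.
    apply functional_extensionality; intro i. unfold one_inf.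
    destruct (w0 i) eqn:E2; auto. exfalso.
    apply (lex_lt_not_le (shiftn i w0) s).
    - exists O. split. intros; lia. unfold shiftn. rewrite Nat.add_0_r. auto.
    - apply Hsmin. apply S_tilde_shift; auto. }
  assert (Ht0 : t O = true).
  { destruct (t O) eqn:E; auto. exfalso. apply Hz.
    apply functional_extensionality; intro i. unfold zero_inf.
    destruct (w0 i) eqn:E2; auto. exfalso.
    apply (lex_lt_not_le t (shiftn i w0)).
    - exists O. split. intros; lia. unfold shiftn. rewrite Nat.add_0_r. auto.
    - apply Htmax. apply S_tilde_shift; auto. }
  exists s, t. split.
  - intro n. destruct n as [|m].
    + change (shiftn 0 (bcons true s)) with (bcons true s).
      change (shiftn 0 (bcons false t)) with (bcons false t).
      change (shift (bcons true s)) with s. change (shift (bcons false t)) with t.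
      assert (Es : s = bcons false (shift s)) by (rewrite (bcons_shift s) at 1; rewrite Hs0; auto).
      assert (Et : t = bcons true (shift t)) by (rewrite (bcons_shift t) at 1; rewrite Ht0; auto).
      repeat split.
      * rewrite Es at 1. apply bcons_lt.
      * rewrite Et. apply bcons_le. apply Hsmin. apply (S_tilde_shift _ _ _ 1); auto.
      * rewrite Es at 1. apply bcons_le. apply Htmax. apply (S_tilde_shift _ _ _ 1); auto.
      * rewrite Et at 2. apply bcons_lt.
    + change (shiftn (S m) (bcons true s)) with (shiftn m s).
      change (shiftn (S m) (bcons false t)) with (shiftn m t).
      change (shift (bcons true s)) with s. change (shift (bcons false t)) with t.
      repeat split; [apply Hsmin | apply Htmax | apply Hsmin | apply Htmax];
        apply S_tilde_shift; auto.
  - intro w. split.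
    + intros H n. split.
      * eapply lex_le_trans. apply (Hs O). apply H.
      * eapply lex_le_trans. apply H. apply (Ht O).
    + intros H n. split; [apply Hsmin | apply Htmax]; apply S_tilde_shift; auto.
Qed.
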